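(* Let $\alpha,\beta>0$ and $f$ as in the context. Let $(\mathbf{V}^0,\mathbf{P}^0)\in\ell^\infty(\mathbb{Z})\times\ell^\infty(\mathbb{Z})$ be nonnegative and not identically zero, and let $(\mathbf{V},\mathbf{P})$ be the unique global classical solution of $$V_j'(t)=-2\alpha V_j(t)+\beta(P_j(t)+P_{j+1}(t)),\qquad P_j'(t)=f(P_j(t))+\alpha(V_j(t)+V_{j-1}(t))-2\beta P_j(t),\qquad t>0,\ j\in\mathbb{Z},$$ with $(\mathbf{V}(0),\mathbf{P}(0))=(\mathbf{V}^0,\mathbf{P}^0)$. Then $\lim_{t\to+\infty}(V_j(t),P_j(t))=(\beta/\alpha,1)$ locally uniformly in $j\in\mathbb{Z}$.
   Context: $f\in\mathscr{C}^1([0,1])$ satisfies $f(0)=f(1)=0$ and $0<f(u)\le f'(0)u$ for $u\in(0,1)$, extended to a locally Lipschitz function on $\mathbb{R}$ negative on $\mathbb{R}\setminus[0,1]$. Existence and uniqueness of a bounded global classical solution ($V_j,P_j\in\mathscr{C}^1([0,\infty))$) for such data is established in the paper. *)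

(* Defs.v *)
From Stdlib Require Import Reals ZArith.
From Coquelicot Require Import Coquelicot.
Open Scope R_scope.

Definition has_deriv_within (g : R -> R) (D : R -> Prop) (x l : R) : Prop :=
  filterlim (fun h => (g (x + h) - g x) / h)
    (within (fun h => h <> 0 /\ D (x + h)) (locally 0)) (locally l).

Definition continuous_within (g : R -> R) (D : R -> Prop) (x : R) : Prop :=
  filterlim g (within D (locally x)) (locally (g x)).

Definition C1_on_with (g : R -> R) (D : R -> Prop) (dg : R -> R) : Prop :=
  (forall x, D x -> has_deriv_within g D x (dg x)) /\
  (forall x, D x -> continuous_within dg D x).

Definition unit_interval (x : R) : Prop := 0 <= x <= 1.
Definition nonneg_half_line (t : R) : Prop := 0 <= t.

Definition locally_lipschitz (g : R -> R) : Prop :=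
  forall x, exists delta L, 0 < delta /\
    forall y z, Rabs (y - x) < delta -> Rabs (z - x) < delta ->
      Rabs (g y - g z) <= L * Rabs (y - z).

(* Standing hypotheses on f; df is its derivative on [0,1], so df 0 = f'(0). *)
Definition admissible_f (f : R -> R) : Prop :=
  (exists df : R -> R,
     C1_on_with f unit_interval df /\
     forall u, 0 < u < 1 -> 0 < f u <= df 0 * u) /\
  f 0 = 0 /\ f 1 = 0 /\
  locally_lipschitz f /\
  (forall u, (u < 0 \/ 1 < u) -> f u < 0).

Definition bounded_seq (a : Z -> R) : Prop := exists M, forall j, Rabs (a j) <= M.

(* Main.v *)
Require Import Defs.
From Stdlib Require Import Reals ZArith Lra Lia Psatz List Classical.
From Coquelicot Require Import Coquelicot.
Open Scope R_scope.

Lemma hdw_eps (g : R -> R) (D : R -> Prop) (x l : R) :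
  has_deriv_within g D x l -> forall e, 0 < e -> exists d, 0 < d /\
    forall h, h <> 0 -> D (x + h) -> Rabs h < d ->
      Rabs ((g (x + h) - g x) / h - l) < e.
Proof.
  intros H e He.
  unfold has_deriv_within in H.
  apply filterlim_locally with (eps := mkposreal e He) in H.
  destruct H as [[d Hd] H].
  exists d; split; [exact Hd|].
  intros h h0 Dh Hh.
  specialize (H h).
  assert (B: ball 0 d h).
  { unfold ball; simpl; unfold AbsRing_ball, abs, minus, plus, opp; simpl.
    replace (h + - 0) with h by ring. exact Hh. }
  specialize (H B (conj h0 Dh)).
  unfold ball in H; simpl in H; unfold AbsRing_ball, abs, minus, plus, opp in H; simpl in H.
  exact H.
Qed.

Lemma cont_eps (g : R -> R) (x : R) : continuity_pt g x ->
  forall e, 0 < e -> exists d, 0 < d /\ forall y, Rabs (y - x) < d -> Rabs (g y - g x) < e.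
Proof.
  intros H e He.
  unfold continuity_pt, continue_in, limit1_in, limit_in in H.
  destruct (H e He) as [d [Hd H2]].
  exists d; split; auto.
  intros y Hy.
  destruct (Req_dec y x) as [->|Hne].
  - rewrite Rminus_diag, Rabs_R0; auto.
  - apply (H2 y). split. unfold D_x, no_cond. split; auto. simpl. unfold R_dist. exact Hy.
Qed.

Lemma deriv_cont (g : R -> R) x d : is_derive g x d -> continuity_pt g x.
Proof.
  intros H. apply derivable_continuous_pt. exists d. apply is_derive_Reals; exact H.
Qed.

Lemma deriv_left_contra (g : R -> R) x d : is_derive g x d -> 0 < d ->
  (exists r, 0 < r /\ forall t, x - r < t < x -> g x < g t) -> False.
Proof.
  intros H Hd [r [Hr Hl]].
  apply is_derive_Reals in H.
  destruct (H d Hd) as [[del Hdel] H2].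
  set (h := - Rmin (del/2) (r/2)).
  assert (hneg : h < 0). { unfold h. assert (0 < Rmin (del/2) (r/2)) by (apply Rmin_pos; lra). lra. }
  assert (hd : Rabs h < del).
  { unfold h. rewrite Rabs_Ropp, Rabs_pos_eq. pose proof (Rmin_l (del/2) (r/2)). simpl in *; lra.
    apply Rlt_le, Rmin_pos; lra. }
  specialize (H2 h (Rlt_not_eq _ _ hneg) hd).
  assert (Hg : g x < g (x + h)).
  { apply Hl. unfold h. pose proof (Rmin_r (del/2) (r/2)). assert (0 < Rmin (del/2) (r/2)) by (apply Rmin_pos; lra). lra. }
  assert (q : (g (x + h) - g x) / h < 0).
  { assert (/h < 0) by (apply Rinv_lt_0_compat; lra). unfold Rdiv.
    assert (0 < g (x + h) - g x) by lra. nra. }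
  apply Rabs_def2 in H2. lra.
Qed.

Lemma list_near {A : Type} (l : list A) (z : A -> R -> R) (x : R) :
  (forall i, In i l -> continuity_pt (z i) x /\ 0 < z i x) ->
  exists d, 0 < d /\ forall y, Rabs (y - x) < d -> forall i, In i l -> 0 < z i y.
Proof.
  induction l as [|a l IH]; intros H.
  - exists 1; split; [lra|]. intros y _ i [].
  - destruct IH as [d1 [Hd1 H1]]. { intros i Hi; apply H; right; auto. }
    destruct (H a (or_introl eq_refl)) as [Ca Pa].
    destruct (cont_eps _ _ Ca (z a x) Pa) as [d2 [Hd2 H2]].
    exists (Rmin d1 d2); split; [apply Rmin_pos; auto|].
    intros y Hy i [<-|Hi].
    + specialize (H2 y). assert (Rabs (y - x) < d2) by (pose proof (Rmin_r d1 d2); lra).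
      specialize (H2 H0). apply Rabs_def2 in H2. lra.
    + apply H1; auto. pose proof (Rmin_l d1 d2); lra.
Qed.

Lemma first_touch {A : Type} (l : list A) (z dz : A -> R -> R) (t0 : R) :
  (forall i t, In i l -> t0 <= t -> is_derive (z i) t (dz i t)) ->
  (forall i, In i l -> 0 < z i t0) ->
  (forall i t, In i l -> t0 < t -> (forall k, In k l -> 0 <= z k t) -> z i t = 0 -> 0 < dz i t) ->
  forall i t, In i l -> t0 <= t -> 0 < z i t.
Proof.
  intros Hd H0 Ht i1 t1 Hi1 Ht1.
  apply Rnot_le_lt; intro Hbad.
  set (E := fun s => t0 <= s <= t1 /\ forall u, t0 <= u <= s -> forall k, In k l -> 0 < z k u).
  assert (Eb : bound E). { exists t1. intros s Es. apply Es. }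
  assert (E0 : exists s, E s).
  { exists t0. split; [lra|]. intros u Hu k Hk. replace u with t0 by lra. auto. }
  destruct (completeness E Eb E0) as [tau [Hub Hlub]].
  assert (Htau0 : t0 <= tau). { apply Hub. destruct E0 as [s Es]. split; [lra|].
    intros u Hu k Hk. replace u with t0 by lra. auto. }
  assert (Htau1 : tau <= t1). { apply Hlub. intros s Es. apply Es. }
  assert (Ha : forall u, t0 <= u < tau -> forall k, In k l -> 0 < z k u).
  { intros u Hu. apply NNPP. intro Hn.
    assert (is_upper_bound E u).
    { intros s Es. destruct (Rle_or_lt s u); auto. exfalso. apply Hn. apply Es. lra. }
    specialize (Hlub u H). lra. }
  assert (Cont : forall k t, In k l -> t0 <= t -> continuity_pt (z k) t).
  { intros k t Hk Ht'. eapply deriv_cont. apply Hd; eauto. }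
  assert (Hb : exists i, In i l /\ z i tau <= 0).
  { apply NNPP; intro Hn.
    assert (Hpos : forall i, In i l -> continuity_pt (z i) tau /\ 0 < z i tau).
    { intros i Hi. split. apply Cont; auto. apply Rnot_le_lt. intro. apply Hn. eauto. }
    destruct (list_near l z tau Hpos) as [d [Hd0 Hnear]].
    set (s := Rmin (tau + d/2) t1).
    assert (Es : E s).
    { split. split. unfold s. apply Rmin_case; lra. apply Rmin_r.
      intros u Hu k Hk. destruct (Rlt_or_le u tau).
      - apply Ha; auto. lra.
      - apply Hnear; auto. pose proof (Rmin_l (tau + d/2) t1) as Hm. fold s in Hm. apply Rabs_def1; lra. }
    specialize (Hub s Es). unfold s in Hub.
    revert Hub. apply Rmin_case_strong; intros Hm Hs. lra.
    assert (tau = t1) by lra. subst tau.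
    apply Hn. exists i1. auto. }
  destruct Hb as [i [Hi Hzi]].
  assert (Htau : t0 < tau).
  { destruct Htau0 as [|Heq]; auto. subst tau. specialize (H0 i Hi). lra. }
  assert (Hd2 : forall k, In k l -> 0 <= z k tau).
  { intros k Hk. apply Rnot_lt_le; intro Hneg.
    destruct (cont_eps _ _ (Cont k tau Hk (Rlt_le _ _ Htau)) (- z k tau)) as [d [Hd0 Hc]]. lra.
    set (u := tau - Rmin (d/2) ((tau - t0)/2)).
    assert (0 < Rmin (d/2) ((tau - t0)/2)) by (apply Rmin_pos; lra).
    pose proof (Rmin_l (d/2) ((tau - t0)/2)). pose proof (Rmin_r (d/2) ((tau - t0)/2)).
    specialize (Hc u). assert (Rabs (u - tau) < d).
    { unfold u. replace (tau - Rmin (d / 2) ((tau - t0) / 2) - tau) with (- Rmin (d / 2) ((tau - t0) / 2)) by ring.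
      rewrite Rabs_Ropp, Rabs_pos_eq; lra. }
    specialize (Hc H3). apply Rabs_def2 in Hc.
    assert (0 < z k u) by (apply Ha; auto; unfold u; lra). lra. }
  assert (Hz : z i tau = 0) by (specialize (Hd2 i Hi); lra).
  specialize (Ht i tau Hi Htau Hd2 Hz).
  apply (deriv_left_contra (z i) tau (dz i tau)); [apply Hd; auto; lra | exact Ht | ].
  exists (tau - t0); split; [lra|]. intros t Htt. rewrite Hz. apply Ha; auto. lra.
Qed.

Lemma is_derive_expmul (x : R -> R) c t d : is_derive x t d ->
  is_derive (fun s => exp (c * s) * x s) t (exp (c * t) * (d + c * x t)).
Proof.
  intros H.
  assert (He : is_derive (fun s => exp (c*s)) t (c * exp (c*t))).
  { auto_derive; auto; ring. }
  pose proof (is_derive_mult (K:=R_AbsRing) _ _ t _ _ He H) as Hm.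
  replace (exp (c * t) * (d + c * x t)) with (plus (mult (c * exp (c * t)) (x t)) (mult (exp (c * t)) d)).
  apply Hm. intros; apply Rmult_comm.
  unfold plus, mult; simpl. ring.
Qed.

Lemma exp_mvt (x dx : R -> R) c a b : a < b ->
  (forall s, a <= s <= b -> is_derive x s (dx s)) ->
  exists xi, a <= xi <= b /\
    exp (c * b) * x b - exp (c * a) * x a = exp (c * xi) * (dx xi + c * x xi) * (b - a).
Proof.
  intros Hab Hd.
  destruct (MVT_gen (fun s => exp (c * s) * x s) a b (fun s => exp (c * s) * (dx s + c * x s)))
    as [xi [Hxi Heq]].
  - intros s Hs. rewrite Rmin_left, Rmax_right in Hs by lra. apply is_derive_expmul, Hd. lra.
  - intros s Hs. rewrite Rmin_left, Rmax_right in Hs by lra.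
    eapply deriv_cont. apply is_derive_expmul, Hd. lra.
  - rewrite Rmin_left, Rmax_right in Hxi by lra. exists xi. split; auto.
Qed.

Lemma pos_persist (x dx : R -> R) c s :
  (forall t, s <= t -> is_derive x t (dx t)) ->
  (forall t, s <= t -> dx t >= - c * x t) -> 0 < x s ->
  forall t, s <= t -> 0 < x t.
Proof.
  intros Hd Hineq Hs t Ht.
  destruct Ht as [Ht|<-]; auto.
  destruct (exp_mvt x dx c s t Ht) as [xi [Hxi Heq]].
  { intros u Hu. apply Hd. lra. }
  specialize (Hineq xi (proj1 Hxi)).
  assert (0 <= exp (c * xi) * (dx xi + c * x xi) * (t - s)).
  { apply Rmult_le_pos. apply Rmult_le_pos. left; apply exp_pos. lra. lra. }
  assert (0 < exp (c * s) * x s) by (apply Rmult_lt_0_compat; auto; apply exp_pos).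
  assert (0 < exp (c * t) * x t) by lra.
  pose proof (exp_pos (c * t)).
  destruct (Rlt_or_le 0 (x t)); auto. nra.
Qed.

Lemma pos_strict (x dx g : R -> R) c a :
  (forall t, a < t -> is_derive x t (dx t)) ->
  (forall t, a < t -> dx t >= - c * x t + g t) ->
  (forall t, a < t -> 0 <= x t) -> (forall t, a < t -> 0 < g t) ->
  forall t, a < t -> 0 < x t.
Proof.
  intros Hd Hineq Hnn Hg t Ht.
  set (a' := (a + t) / 2).
  destruct (exp_mvt x dx c a' t) as [xi [Hxi Heq]].
  { unfold a'; lra. }
  { intros u Hu. apply Hd. unfold a' in Hu; lra. }
  assert (Ha'x : a < xi) by (unfold a' in Hxi; lra).
  specialize (Hineq xi Ha'x). specialize (Hg xi Ha'x).
  assert (0 < exp (c * xi) * (dx xi + c * x xi) * (t - a')).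
  { apply Rmult_lt_0_compat. apply Rmult_lt_0_compat. apply exp_pos. lra. unfold a'; lra. }
  assert (0 <= exp (c * a') * x a') by (apply Rmult_le_pos; [left; apply exp_pos| apply Hnn; unfold a'; lra]).
  assert (0 < exp (c * t) * x t) by lra.
  pose proof (exp_pos (c * t)).
  destruct (Rlt_or_le 0 (x t)); auto. nra.
Qed.

Definition zrange (a b : Z) : list Z :=
  map (fun n => (a + Z.of_nat n)%Z) (seq 0 (Z.to_nat (b - a + 1))).

Lemma in_zrange a b j : In j (zrange a b) <-> (a <= j <= b)%Z.
Proof.
  unfold zrange. rewrite in_map_iff. split.
  - intros [n [<- Hn]]. apply in_seq in Hn. lia.
  - intros H. exists (Z.to_nat (j - a)). split. lia. apply in_seq. lia.
Qed.

Definition lpair (a1 b1 a2 b2 : Z) : list (Z * bool) :=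
  map (fun j => (j, true)) (zrange a1 b1) ++ map (fun j => (j, false)) (zrange a2 b2).

Lemma in_lpair_t a1 b1 a2 b2 j : In (j, true) (lpair a1 b1 a2 b2) <-> (a1 <= j <= b1)%Z.
Proof.
  unfold lpair. rewrite in_app_iff, !in_map_iff. split.
  - intros [[k [Hk Hin]]|[k [Hk Hin]]]; inversion Hk; subst. apply in_zrange; auto.
  - intros H. left. exists j. split; auto. apply in_zrange; auto.
Qed.

Lemma in_lpair_f a1 b1 a2 b2 j : In (j, false) (lpair a1 b1 a2 b2) <-> (a2 <= j <= b2)%Z.
Proof.
  unfold lpair. rewrite in_app_iff, !in_map_iff. split.
  - intros [[k [Hk Hin]]|[k [Hk Hin]]]; inversion Hk; subst. apply in_zrange; auto.
  - intros H. right. exists j. split; auto. apply in_zrange; auto.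
Qed.

Lemma list_min_pos {A : Type} (l : list A) (v : A -> R) :
  (forall i, In i l -> 0 < v i) -> exists m, 0 < m /\ forall i, In i l -> m <= v i.
Proof.
  induction l as [|a l IH]; intros H.
  - exists 1; split; [lra|]. intros i [].
  - destruct IH as [m [Hm Hm2]]. { intros; apply H; right; auto. }
    exists (Rmin m (v a)). split. apply Rmin_pos; auto. apply H; left; auto.
    intros i [<-|Hi]. apply Rmin_r. eapply Rle_trans. apply Rmin_l. auto.
Qed.

Lemma list_delta {A : Type} (l : list A) (Q : A -> R -> Prop) :
  (forall i, In i l -> exists d, 0 < d /\ forall h, 0 < h < d -> Q i h) ->
  exists d, 0 < d /\ forall i, In i l -> forall h, 0 < h < d -> Q i h.
Proof.
  induction l as [|a l IH]; intros H.
  - exists 1; split; [lra|]. intros i [].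
  - destruct IH as [d [Hd Hd2]]. { intros; apply H; right; auto. }
    destruct (H a (or_introl eq_refl)) as [d2 [Hd2' Hq]].
    exists (Rmin d d2). split. apply Rmin_pos; auto.
    intros i [<-|Hi] h Hh.
    apply Hq. pose proof (Rmin_r d d2). lra.
    apply Hd2; auto. pose proof (Rmin_l d d2). lra.
Qed.

Section Ff.
Variable f : R -> R.
Hypothesis Hf : admissible_f f.

Lemma f_cont : forall x, continuity_pt f x.
Proof.
  intros x. destruct Hf as [_ [_ [_ [Hl _]]]].
  destruct (Hl x) as [d [L [Hd HL]]].
  unfold continuity_pt, continue_in, limit1_in, limit_in; simpl; unfold R_dist.
  intros e He. exists (Rmin d (e / (Rabs L + 1))). split.
  apply Rmin_pos; auto. apply Rdiv_lt_0_compat; auto. pose proof (Rabs_pos L); lra.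
  intros y [_ Hy].
  pose proof (Rmin_l d (e / (Rabs L + 1))). pose proof (Rmin_r d (e / (Rabs L + 1))).
  assert (Hx : Rabs (x - x) < d) by (rewrite Rminus_diag, Rabs_R0; auto).
  specialize (HL y x ltac:(lra) Hx).
  pose proof (Rabs_pos L). pose proof (Rabs_pos (y - x)).
  assert (L * Rabs (y - x) <= Rabs L * Rabs (y - x)) by (apply Rmult_le_compat_r; auto; apply RRle_abs).
  assert (Rabs L * Rabs (y - x) <= Rabs L * (e / (Rabs L + 1))) by (apply Rmult_le_compat_l; lra).
  assert (Rabs L * (e / (Rabs L + 1)) < e).
  { apply Rmult_lt_reg_r with (Rabs L + 1). lra. field_simplify; lra. }
  lra.
Qed.

Lemma f_lowlin : forall M, 0 < M -> exists L, 0 < L /\ forall x, Rabs x <= M -> f x >= - L * Rabs x.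
Proof.
  intros M HM. destruct Hf as [_ [Hf0 [_ [Hl _]]]].
  destruct (Hl 0) as [d [L0 [Hd HL]]].
  destruct (continuity_ab_min f (-M) M ltac:(lra) (fun c _ => f_cont c)) as [mx [Hmx _]].
  exists (Rabs L0 + Rabs (f mx) / d + 1). split.
  { pose proof (Rabs_pos L0). assert (0 <= Rabs (f mx) / d) by (apply Rdiv_le_0_compat; [apply Rabs_pos|lra]). lra. }
  intros x Hx.
  pose proof (Rabs_pos x). pose proof (Rabs_pos L0).
  assert (0 <= Rabs (f mx) / d) by (apply Rdiv_le_0_compat; [apply Rabs_pos|lra]).
  destruct (Rlt_or_le (Rabs x) d) as [Hs|Hs].
  - assert (Hz0 : Rabs (0 - 0) < d) by (rewrite Rminus_diag, Rabs_R0; auto).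
    specialize (HL x 0 ltac:(rewrite Rminus_0_r; auto) Hz0).
    rewrite Hf0, !Rminus_0_r in HL.
    pose proof (Rabs_le_between (f x) (L0 * Rabs x)) as HB. pose proof (Rle_trans _ _ _ (Rle_abs _) HL). pose proof (Rle_abs (- f x)). rewrite Rabs_Ropp in *.
    assert (L0 * Rabs x <= Rabs L0 * Rabs x) by (apply Rmult_le_compat_r; auto; apply RRle_abs).
    nra.
  - assert (Hm1 : f mx <= f x) by (apply Hmx; apply Rabs_le_between; auto).
    assert (Hm2 : Rabs (f mx) / d * d <= Rabs (f mx) / d * Rabs x) by (apply Rmult_le_compat_l; auto).
    replace (Rabs (f mx) / d * d) with (Rabs (f mx)) in Hm2 by (field; lra).
    pose proof (Rle_abs (- f mx)) as Hm3. rewrite Rabs_Ropp in Hm3. nra.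
Qed.

Lemma f_neg : forall a b, 1 < a -> a <= b -> exists m, 0 < m /\ forall x, a <= x <= b -> f x <= - m.
Proof.
  intros a b Ha Hab. destruct Hf as [_ [_ [_ [_ Hneg]]]].
  destruct (continuity_ab_maj f a b Hab (fun c _ => f_cont c)) as [Mx [HM HMx]].
  exists (- f Mx). split. assert (f Mx < 0) by (apply Hneg; right; lra). lra.
  intros x Hx. specialize (HM x Hx). lra.
Qed.

Lemma f_kpp : forall th, 0 < th < 1 -> exists c, 0 < c /\ forall p, 0 <= p <= th -> f p >= c * p.
Proof.
  intros th Hth. destruct Hf as [[df [[Hder _] Hb]] [Hf0 _]].
  assert (Hdf : 0 < df 0).
  { destruct (Hb (1/2) ltac:(lra)) as [H1 H2]. nra. }
  assert (U0 : unit_interval 0) by (unfold unit_interval; lra).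
  destruct (hdw_eps f unit_interval 0 (df 0) (Hder 0 U0) (df 0 / 2) ltac:(lra)) as [d1 [Hd1 Hq]].
  set (h1 := Rmin (d1 / 2) th).
  assert (Hh1 : 0 < h1) by (apply Rmin_pos; lra).
  assert (Hh1th : h1 <= th) by apply Rmin_r.
  destruct (continuity_ab_min f h1 th Hh1th (fun c _ => f_cont c)) as [mx [Hmx Hmxr]].
  assert (Hfmx : 0 < f mx) by (apply Hb; lra).
  exists (Rmin (df 0 / 2) (f mx / th)). split.
  apply Rmin_pos. lra. apply Rdiv_lt_0_compat; lra.
  intros p Hp.
  pose proof (Rmin_l (df 0 / 2) (f mx / th)). pose proof (Rmin_r (df 0 / 2) (f mx / th)).
  destruct (Rlt_or_le p h1) as [Hp1|Hp1].
  - destruct (Req_dec p 0) as [->|Hp0].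
    + rewrite Hf0. lra.
    + assert (Hh1d : h1 <= d1 / 2) by apply Rmin_l.
      specialize (Hq p Hp0). rewrite Rplus_0_l in Hq.
      assert (unit_interval p) by (unfold unit_interval; lra).
      specialize (Hq H1 ltac:(rewrite Rabs_pos_eq; lra)).
      rewrite Hf0, Rminus_0_r in Hq.
      apply Rabs_def2 in Hq. destruct Hq as [Hq1 Hq2].
      assert (Hpp : 0 < p) by lra.
      assert (f p / p * p = f p) by (field; lra).
      assert (df 0 / 2 * p < f p / p * p) by (apply Rmult_lt_compat_r; lra).
      nra.
  - assert (f mx <= f p) by (apply Hmx; lra).
    assert (f mx / th * p <= f mx / th * th).
    { apply Rmult_le_compat_l. left; apply Rdiv_lt_0_compat; lra. lra. }
    replace (f mx / th * th) with (f mx) in H2 by (field; lra).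
    assert (Rmin (df 0 / 2) (f mx / th) * p <= f mx / th * p) by (apply Rmult_le_compat_r; lra).
    lra.
Qed.
End Ff.

Lemma right_cont0 (g : R -> R) l : has_deriv_within g nonneg_half_line 0 l ->
  forall e, 0 < e -> exists d, 0 < d /\ forall h, 0 < h < d -> Rabs (g h - g 0) < e.
Proof.
  intros H e He.
  destruct (hdw_eps _ _ _ _ H 1 ltac:(lra)) as [d [Hd Hq]].
  pose proof (Rabs_pos l).
  exists (Rmin d (e / (Rabs l + 1))). split. apply Rmin_pos; auto. apply Rdiv_lt_0_compat; lra.
  intros h Hh. pose proof (Rmin_l d (e / (Rabs l + 1))). pose proof (Rmin_r d (e / (Rabs l + 1))).
  specialize (Hq h ltac:(lra)). rewrite Rplus_0_l in Hq.
  specialize (Hq ltac:(unfold nonneg_half_line; lra) ltac:(rewrite Rabs_pos_eq; lra)).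
  set (q := (g h - g 0) / h) in Hq.
  assert (Eq : g h - g 0 = q * h) by (unfold q; field; lra).
  rewrite Eq, Rabs_mult, (Rabs_pos_eq h) by lra.
  assert (Rabs q < Rabs l + 1).
  { pose proof (Rabs_triang_inv q l). lra. }
  assert (Rabs q * h <= (Rabs l + 1) * h) by (apply Rmult_le_compat_r; lra).
  assert ((Rabs l + 1) * h < (Rabs l + 1) * (e / (Rabs l + 1))) by (apply Rmult_lt_compat_l; lra).
  replace ((Rabs l + 1) * (e / (Rabs l + 1))) with e in * by (field; lra).
  lra.
Qed.
Lemma der_add (g w : R -> R) t dg dw : is_derive g t dg -> is_derive w t dw ->
  is_derive (fun s => g s + w s) t (dg + dw).
Proof. intros. apply (is_derive_plus g w); auto. Qed.
Lemma der_sub (g w : R -> R) t dg dw : is_derive g t dg -> is_derive w t dw ->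
  is_derive (fun s => g s - w s) t (dg - dw).
Proof. intros. apply (is_derive_minus g w); auto. Qed.
Lemma exp_mono x y : x <= y -> exp x <= exp y.
Proof. intros [H | ->]. left; apply exp_increasing; auto. lra. Qed.
Lemma exp_ge1 x : 0 <= x -> 1 <= exp x.
Proof. intros; pose proof (exp_ineq1_le x); lra. Qed.

Lemma abs_succ (k : Z) : Rabs (IZR (k + 1)) <= Rabs (IZR k) + 1.
Proof. rewrite plus_IZR. eapply Rle_trans. apply Rabs_triang. rewrite Rabs_R1; lra. Qed.
Lemma abs_pred (k : Z) : Rabs (IZR (k - 1)) <= Rabs (IZR k) + 1.
Proof. rewrite minus_IZR. eapply Rle_trans. apply Rabs_triang. rewrite Rabs_Ropp, Rabs_R1; lra. Qed.

Lemma abs_succ' (k : Z) : Rabs (IZR k) - 1 <= Rabs (IZR (k + 1)).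
Proof. rewrite plus_IZR. pose proof (Rabs_triang_inv (IZR k + 1) (-1)). 
  replace (IZR k + 1 - -1) with (IZR k + 2) in H by ring.
  pose proof (Rabs_triang (IZR k + 1) (-1)). replace (IZR k + 1 + -1) with (IZR k) in H0 by ring.
  assert (Rabs (-1) = 1) by (rewrite Rabs_left; lra). lra. Qed.
Lemma abs_pred' (k : Z) : Rabs (IZR k) - 1 <= Rabs (IZR (k - 1)).
Proof. rewrite minus_IZR. pose proof (Rabs_triang (IZR k - 1) 1).
  replace (IZR k - 1 + 1) with (IZR k) in H by ring. rewrite Rabs_R1 in H. lra. Qed.

Lemma cos_sum1 k x : cos (k * x) + cos (k * (x + 1)) = 2 * cos (k / 2) * cos (k * (x + 1 / 2)).
Proof.
  rewrite Rplus_comm, form1. f_equal. f_equal. f_equal. field. f_equal. field.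
Qed.
Lemma cos_sum2 k x : cos (k * (x + 1 / 2)) + cos (k * (x - 1 + 1 / 2)) = 2 * cos (k / 2) * cos (k * x).
Proof.
  rewrite form1. f_equal. f_equal. f_equal. field. f_equal. field.
Qed.

Lemma exp_small2 (mu X t0 : R) : 0 < mu -> 0 < X -> forall t, t0 + Rabs (ln X) / mu <= t ->
  exp (- mu * (t - t0)) <= X.
Proof.
  intros Hr HX t Ht.
  rewrite <- (exp_ln X) by auto. apply exp_mono.
  assert (Rabs (ln X) <= mu * (t - t0)).
  { apply Rmult_le_compat_l with (r := mu) in Ht; [|lra].
    replace (mu * (t0 + Rabs (ln X) / mu)) with (mu * t0 + Rabs (ln X)) in Ht by (field; lra). nra. }
  pose proof (Rle_abs (- ln X)). rewrite Rabs_Ropp in H0. lra.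
Qed.

Section Sol.
Variables (alpha beta M : R) (f : R -> R) (V P : Z -> R -> R).
Hypothesis Ha : 0 < alpha.
Hypothesis Hb : 0 < beta.
Hypothesis Hf : admissible_f f.
Hypothesis HM : 0 < M.
Hypothesis Hbd : forall j t, 0 <= t -> Rabs (V j t) <= M /\ Rabs (P j t) <= M.
Hypothesis HVd : forall j t, 0 < t ->
     is_derive (V j) t (- 2 * alpha * V j t + beta * (P j t + P (j + 1)%Z t)).
Hypothesis HPd : forall j t, 0 < t ->
     is_derive (P j) t (f (P j t) + alpha * (V j t + V (j - 1)%Z t) - 2 * beta * P j t).
Hypothesis Hrc : forall j e, 0 < e -> exists d, 0 < d /\ forall h, 0 < h < d ->
     Rabs (V j h - V j 0) < e /\ Rabs (P j h - P j 0) < e.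
Hypothesis Hnn0 : forall j, 0 <= V j 0 /\ 0 <= P j 0.

Lemma bdV j t : 0 <= t -> - M <= V j t <= M.
Proof. intros H. apply Rabs_le_between. apply Hbd; auto. Qed.
Lemma bdP j t : 0 <= t -> - M <= P j t <= M.
Proof. intros H. apply Rabs_le_between. apply Hbd; auto. Qed.

Lemma nonneg_eta : forall j t, 0 < t -> exists Lam, forall eta, 0 < eta ->
  V j t > - eta * exp (Lam * t) * (1 + Rabs (IZR j)) /\
  P j t > - eta * exp (Lam * t) * (1 + Rabs (IZR j)).
Proof.
  intros j t Ht.
  destruct (f_lowlin f Hf M HM) as [L [HL HLf]].
  set (Lam := L + 3 * alpha + 3 * beta + 1).
  exists Lam. intros eta Heta.
  set (RR := Z.max (Z.abs j) (up (M / eta))).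
  assert (HR1 : M / eta < IZR RR).
  { pose proof (archimed (M / eta)) as [Hu _]. apply Rlt_le_trans with (IZR (up (M/eta))); [lra|].
    apply IZR_le. apply Z.le_max_r. }
  assert (HRe : M < eta * IZR RR).
  { apply Rmult_lt_compat_l with (r := eta) in HR1; auto. replace (eta * (M / eta)) with M in HR1 by (field; lra). lra. }
  assert (HR0 : (0 <= RR)%Z) by (unfold RR; lia).
  assert (HjR : (- RR <= j <= RR)%Z) by (unfold RR; lia).
  set (l := lpair (- RR) RR (- RR) RR).
  destruct (list_delta l (fun i h => let '(k, b) := i in if b then V k h > - eta else P k h > - eta)) as [d [Hd Hdl]].
  { intros [k b] _. destruct (Hrc k eta Heta) as [d [Hd Hd2]]. exists d. split; auto.
    intros h Hh. destruct (Hd2 h Hh) as [H1 H2]. destruct (Hnn0 k) as [H3 H4].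
    apply Rabs_def2 in H1. apply Rabs_def2 in H2. destruct b; lra. }
  set (s := Rmin (d / 2) t).
  assert (Hs0 : 0 < s) by (apply Rmin_pos; lra).
  assert (Hst : s <= t) by apply Rmin_r.
  assert (Hsd : s < d) by (unfold s; pose proof (Rmin_l (d/2) t); lra).
  set (z := fun (i : Z * bool) (u : R) => let '(k, b) := i in
     (if b then V k u else P k u) + eta * exp (Lam * u) * (1 + Rabs (IZR k))).
  set (dz := fun (i : Z * bool) (u : R) => let '(k, b) := i in
     (if b then - 2 * alpha * V k u + beta * (P k u + P (k + 1)%Z u)
      else f (P k u) + alpha * (V k u + V (k - 1)%Z u) - 2 * beta * P k u)
     + eta * (Lam * exp (Lam * u)) * (1 + Rabs (IZR k))).
  assert (Key : forall i u, In i l -> s <= u -> 0 < z i u).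
  { apply (first_touch l z dz s).
    - intros [k b] u _ Hu. simpl. apply der_add.
      destruct b; [apply HVd | apply HPd]; lra.
      auto_derive; auto. ring.
    - intros [k b] Hi. simpl.
      assert (1 <= exp (Lam * s)) by (apply exp_ge1; unfold Lam; nra).
      pose proof (Rabs_pos (IZR k)).
      assert (eta <= eta * exp (Lam * s) * (1 + Rabs (IZR k))).
      { rewrite <- (Rmult_1_r eta) at 1. rewrite Rmult_assoc. apply Rmult_le_compat_l. lra. nra. }
      specialize (Hdl (k, b) Hi s ltac:(lra)). simpl in Hdl. destruct b; lra.
    - intros [k b] u Hi Hu Hall Hz. simpl in Hz |- *.
      set (E := eta * exp (Lam * u)).
      assert (HE : 0 < E) by (unfold E; apply Rmult_lt_0_compat; auto; apply exp_pos).
      assert (HE2 : eta <= E).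
      { unfold E. rewrite <- (Rmult_1_r eta) at 1. apply Rmult_le_compat_l. lra. apply exp_ge1. unfold Lam; nra. }
      replace (eta * (Lam * exp (Lam * u)) * (1 + Rabs (IZR k))) with (Lam * E * (1 + Rabs (IZR k))) by (unfold E; ring).
      pose proof (Rabs_pos (IZR k)) as Hk0.
      destruct b.
      + apply in_lpair_t in Hi.
        assert (HPk : P k u >= - E * (1 + Rabs (IZR k))).
        { assert (In (k, false) l) by (apply in_lpair_f; auto). specialize (Hall _ H). simpl in Hall. unfold E. lra. }
        assert (HPk1 : P (k + 1)%Z u >= - E * (Rabs (IZR k) + 2)).
        { destruct (Z_le_gt_dec (k + 1) RR).
          - assert (In ((k + 1)%Z, false) l) by (apply in_lpair_f; lia). specialize (Hall _ H). simpl in Hall.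
            pose proof (abs_succ k). fold E in Hall. nra.
          - assert (k = RR) by lia. subst k. pose proof (bdP (RR + 1) u ltac:(lra)).
            assert (E * IZR RR <= E * (Rabs (IZR RR) + 2)) by (apply Rmult_le_compat_l; [lra| pose proof (Rle_abs (IZR RR)); lra]).
            assert (eta * IZR RR <= E * IZR RR) by (apply Rmult_le_compat_r; [apply IZR_le; lia| lra]).
            lra. }
        assert (HVk : V k u = - E * (1 + Rabs (IZR k))) by (unfold E; lra).
        rewrite HVk. unfold Lam in *.
        assert (A1 : beta * (P k u + E * (1 + Rabs (IZR k))) >= 0) by (apply Rle_ge, Rmult_le_pos; lra).
        assert (A2 : beta * (P (k + 1)%Z u + E * (Rabs (IZR k) + 2)) >= 0) by (apply Rle_ge, Rmult_le_pos; lra).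
        assert (A3 : 0 <= E * Rabs (IZR k) * beta) by (apply Rmult_le_pos; [apply Rmult_le_pos|]; lra).
        assert (A4 : 0 <= E * Rabs (IZR k) * alpha) by (apply Rmult_le_pos; [apply Rmult_le_pos|]; lra).
        assert (A4' : 0 <= E * Rabs (IZR k) * L) by (apply Rmult_le_pos; [apply Rmult_le_pos|]; lra).
        assert (A4'' : 0 <= E * Rabs (IZR k)) by (apply Rmult_le_pos; lra).
        assert (A5 : 0 < E * alpha) by (apply Rmult_lt_0_compat; lra).
        assert (A6 : 0 < E * L) by (apply Rmult_lt_0_compat; lra).
        lra.
      + apply in_lpair_f in Hi.
        assert (HVk : V k u >= - E * (1 + Rabs (IZR k))).
        { assert (In (k, true) l) by (apply in_lpair_t; auto). specialize (Hall _ H). simpl in Hall. unfold E. lra. }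
        assert (HVk1 : V (k - 1)%Z u >= - E * (Rabs (IZR k) + 2)).
        { destruct (Z_le_gt_dec (- RR) (k - 1)).
          - assert (In ((k - 1)%Z, true) l) by (apply in_lpair_t; lia). specialize (Hall _ H). simpl in Hall.
            pose proof (abs_pred k). fold E in Hall. nra.
          - assert (k = (- RR)%Z) by lia. subst k. pose proof (bdV (- RR - 1) u ltac:(lra)).
            rewrite Ropp_Ropp_IZR, Rabs_Ropp.
            assert (E * IZR RR <= E * (Rabs (IZR RR) + 2)) by (apply Rmult_le_compat_l; [lra| pose proof (Rle_abs (IZR RR)); lra]).
            assert (eta * IZR RR <= E * IZR RR) by (apply Rmult_le_compat_r; [apply IZR_le; lia| lra]).
            lra. }
        assert (HPk : P k u = - E * (1 + Rabs (IZR k))) by (unfold E; lra).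
        assert (Hfl : f (P k u) >= - L * (E * (1 + Rabs (IZR k)))).
        { assert (Rabs (P k u) <= M) by (apply Hbd; lra).
          specialize (HLf _ H). rewrite HPk in HLf |- *.
          rewrite Rabs_mult, Rabs_Ropp, (Rabs_pos_eq E), (Rabs_pos_eq (1 + _)) in HLf by lra. lra. }
        rewrite HPk in Hfl |- *. unfold Lam in *.
        assert (A1 : alpha * (V k u + E * (1 + Rabs (IZR k))) >= 0) by (apply Rle_ge, Rmult_le_pos; lra).
        assert (A2 : alpha * (V (k - 1)%Z u + E * (Rabs (IZR k) + 2)) >= 0) by (apply Rle_ge, Rmult_le_pos; lra).
        assert (A3 : 0 <= E * Rabs (IZR k) * alpha) by (apply Rmult_le_pos; [apply Rmult_le_pos|]; lra).
        assert (A4 : 0 <= E * Rabs (IZR k) * beta) by (apply Rmult_le_pos; [apply Rmult_le_pos|]; lra).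
        assert (A4'' : 0 <= E * Rabs (IZR k)) by (apply Rmult_le_pos; lra).
        assert (A5 : 0 < E * beta) by (apply Rmult_lt_0_compat; lra).
        assert (A6 : 0 < E * alpha) by (apply Rmult_lt_0_compat; lra).
        lra. }
  split.
  - assert (In (j, true) l) by (apply in_lpair_t; auto).
    specialize (Key _ t H Hst). simpl in Key. lra.
  - assert (In (j, false) l) by (apply in_lpair_f; auto).
    specialize (Key _ t H Hst). simpl in Key. lra.
Qed.


Lemma nonneg : forall j t, 0 < t -> 0 <= V j t /\ 0 <= P j t.
Proof.
  intros j t Ht. destruct (nonneg_eta j t Ht) as [Lam HL].
  set (C := exp (Lam * t) * (1 + Rabs (IZR j))).
  assert (HC : 0 < C) by (unfold C; apply Rmult_lt_0_compat; [apply exp_pos| pose proof (Rabs_pos (IZR j)); lra]).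
  split; apply Rnot_lt_le; intro Hn.
  - destruct (HL (- V j t / (2 * C))) as [H1 _].
    { apply Rdiv_lt_0_compat; lra. }
    replace (- (- V j t / (2 * C)) * exp (Lam * t) * (1 + Rabs (IZR j))) with (V j t / 2) in H1
      by (unfold C; field; split; [pose proof (Rabs_pos (IZR j)); lra | apply Rgt_not_eq, exp_pos]).
    lra.
  - destruct (HL (- P j t / (2 * C))) as [_ H1].
    { apply Rdiv_lt_0_compat; lra. }
    replace (- (- P j t / (2 * C)) * exp (Lam * t) * (1 + Rabs (IZR j))) with (P j t / 2) in H1
      by (unfold C; field; split; [pose proof (Rabs_pos (IZR j)); lra | apply Rgt_not_eq, exp_pos]).
    lra.
Qed.

Lemma posV_from j a : 0 <= a ->
  ((forall t, a < t -> 0 < P j t) \/ (forall t, a < t -> 0 < P (j + 1)%Z t)) ->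
  forall t, a < t -> 0 < V j t.
Proof.
  intros Ha0 Hor.
  apply (pos_strict (V j) (fun t => - 2 * alpha * V j t + beta * (P j t + P (j + 1)%Z t))
           (fun t => beta * (P j t + P (j + 1)%Z t)) (2 * alpha) a).
  - intros t Ht; apply HVd; lra.
  - intros t Ht; lra.
  - intros t Ht; apply nonneg; lra.
  - intros t Ht. pose proof (nonneg j t ltac:(lra)). pose proof (nonneg (j + 1)%Z t ltac:(lra)).
    apply Rmult_lt_0_compat; auto. destruct Hor as [Hq|Hq]; specialize (Hq t Ht); lra.
Qed.

Lemma f_lin_pos : exists L, 0 < L /\ forall p, 0 <= p <= M -> f p >= - L * p.
Proof.
  destruct (f_lowlin f Hf M HM) as [L [HL HLf]]. exists L. split; auto.
  intros p Hp. specialize (HLf p). rewrite Rabs_pos_eq in HLf by lra. apply HLf; lra.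
Qed.

Lemma posP_from j a : 0 <= a ->
  ((forall t, a < t -> 0 < V j t) \/ (forall t, a < t -> 0 < V (j - 1)%Z t)) ->
  forall t, a < t -> 0 < P j t.
Proof.
  intros Ha0 Hor. destruct f_lin_pos as [L [HL HLf]].
  apply (pos_strict (P j) (fun t => f (P j t) + alpha * (V j t + V (j - 1)%Z t) - 2 * beta * P j t)
           (fun t => alpha * (V j t + V (j - 1)%Z t)) (L + 2 * beta) a).
  - intros t Ht; apply HPd; lra.
  - intros t Ht. assert (0 <= P j t <= M).
    { split. apply nonneg; lra. apply bdP; lra. }
    specialize (HLf _ H). lra.
  - intros t Ht; apply nonneg; lra.
  - intros t Ht. pose proof (nonneg j t ltac:(lra)). pose proof (nonneg (j - 1)%Z t ltac:(lra)).
    apply Rmult_lt_0_compat; auto. destruct Hor as [Hq|Hq]; specialize (Hq t Ht); lra.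
Qed.

Hypothesis Hnz : exists j, V j 0 <> 0 \/ P j 0 <> 0.

Lemma all_pos : exists a, 0 < a /\ forall j t, a < t -> 0 < V j t /\ 0 < P j t.
Proof.
  destruct Hnz as [j0 Hj0].
  assert (Hst : exists a, 0 < a /\ ((forall t, a < t -> 0 < V j0 t) \/ (forall t, a < t -> 0 < P j0 t))).
  { destruct (Hnn0 j0) as [HV0 HP0].
    destruct Hj0 as [Hj0|Hj0].
    - assert (Hv : 0 < V j0 0) by lra.
      destruct (Hrc j0 (V j0 0) Hv) as [d [Hd Hd2]].
      destruct (Hd2 (d/2) ltac:(lra)) as [H1 _]. apply Rabs_def2 in H1.
      exists (d/2). split. lra. left. intros t Ht.
      apply (pos_persist (V j0) (fun t => - 2 * alpha * V j0 t + beta * (P j0 t + P (j0 + 1)%Z t)) (2 * alpha) (d/2)).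
      + intros u Hu; apply HVd; lra.
      + intros u Hu. pose proof (nonneg j0 u ltac:(lra)). pose proof (nonneg (j0 + 1)%Z u ltac:(lra)).
        assert (0 <= beta * (P j0 u + P (j0 + 1)%Z u)) by (apply Rmult_le_pos; lra). lra.
      + lra.
      + lra.
    - assert (Hv : 0 < P j0 0) by lra.
      destruct f_lin_pos as [L [HL HLf]].
      destruct (Hrc j0 (P j0 0) Hv) as [d [Hd Hd2]].
      destruct (Hd2 (d/2) ltac:(lra)) as [_ H1]. apply Rabs_def2 in H1.
      exists (d/2). split. lra. right. intros t Ht.
      apply (pos_persist (P j0) (fun t => f (P j0 t) + alpha * (V j0 t + V (j0 - 1)%Z t) - 2 * beta * P j0 t) (L + 2 * beta) (d/2)).
      + intros u Hu; apply HPd; lra.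
      + intros u Hu. pose proof (nonneg j0 u ltac:(lra)). pose proof (nonneg (j0 - 1)%Z u ltac:(lra)).
        assert (0 <= alpha * (V j0 u + V (j0 - 1)%Z u)) by (apply Rmult_le_pos; lra).
        assert (0 <= P j0 u <= M) by (split; [apply nonneg; lra | apply bdP; lra]).
        specialize (HLf _ H3). lra.
      + lra.
      + lra. }
  destruct Hst as [a [Ha0 Hor]].
  assert (Spread : forall K : nat, forall j, (Z.abs (j - j0) <= Z.of_nat K)%Z ->
            (forall t, a < t -> 0 < V j t) /\ (forall t, a < t -> 0 < P j t)).
  { induction K as [|K IH]; intros j Hj.
    - assert (j = j0) by lia. subst j.
      destruct Hor as [Hh|Hh].
      + split; auto. apply posP_from; auto; lra.
      + split; auto. apply posV_from; auto; lra.
    - destruct (Z_le_gt_dec (Z.abs (j - j0)) (Z.of_nat K)) as [Hle|Hgt].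
      + apply IH; auto.
      + destruct (Z_le_gt_dec j0 j).
        * assert (HPj : forall t, a < t -> 0 < P j t).
          { apply posP_from. lra. right. apply IH. lia. }
          split; auto. apply posV_from; auto; lra.
        * assert (HVj : forall t, a < t -> 0 < V j t).
          { apply posV_from. lra. right. apply IH. lia. }
          split; auto. apply posP_from; auto; lra. }
  exists a. split; auto. intros j t Ht.
  destruct (Spread (Z.to_nat (Z.abs (j - j0))) j ltac:(lia)) as [H1 H2]. auto.
Qed.

Lemma exp_small (rho X : R) : 0 < rho -> 0 < X -> forall t, 1 + Rabs (ln X) / rho <= t ->
  exp (- rho * (t - 1)) <= X.
Proof.
  intros Hr HX t Ht.
  rewrite <- (exp_ln X) by auto. apply exp_mono.
  assert (Rabs (ln X) <= rho * (t - 1)).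
  { apply Rmult_le_compat_l with (r := rho) in Ht; [|lra].
    replace (rho * (1 + Rabs (ln X) / rho)) with (rho + Rabs (ln X)) in Ht by (field; lra). nra. }
  pose proof (Rle_abs (- ln X)). rewrite Rabs_Ropp in H0. lra.
Qed.

Lemma upper : forall N eps, 0 < eps -> exists T, forall t, T <= t -> forall j, (Z.abs j <= N)%Z ->
  V j t < beta / alpha + eps /\ P j t < 1 + eps.
Proof.
  intros N eps Heps.
  set (Nn := Z.max N 0). set (n := IZR Nn).
  assert (Hn : 0 <= n) by (unfold n; apply IZR_le; lia).
  set (B := beta / alpha).
  assert (HB : 0 < B) by (unfold B; apply Rdiv_lt_0_compat; lra).
  assert (HaB : alpha * B = beta) by (unfold B; field; lra).
  set (e := eps * alpha / (alpha + beta)).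
  assert (He : 0 < e) by (unfold e; apply Rdiv_lt_0_compat; nra).
  assert (HeB : B * e < eps).
  { unfold B, e. replace (beta / alpha * (eps * alpha / (alpha + beta))) with (eps * (beta / (alpha + beta))) by (field; lra).
    assert (beta / (alpha + beta) < 1). { apply Rmult_lt_reg_r with (alpha + beta). lra. field_simplify; lra. }
    nra. }
  assert (Hee : e < eps).
  { unfold e. replace (eps * alpha / (alpha + beta)) with (eps * (alpha / (alpha + beta))) by (field; lra).
    assert (alpha / (alpha + beta) < 1). { apply Rmult_lt_reg_r with (alpha + beta). lra. field_simplify; lra. }
    nra. }
  set (K1 := 1 + e / 4).
  set (Mx := M + alpha * M / beta).
  assert (HMx : M <= Mx /\ M <= B * Mx).
  { unfold Mx, B. split. assert (0 <= alpha * M / beta) by (apply Rdiv_le_0_compat; nra). lra.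
    replace (beta / alpha * (M + alpha * M / beta)) with (beta / alpha * M + M) by (field; lra).
    assert (0 <= beta / alpha * M) by (apply Rmult_le_pos; [left; apply Rdiv_lt_0_compat|]; lra). lra. }
  set (K0 := Mx + K1 + 1).
  set (Qmax := K0 + Mx + 2).
  destruct (f_neg f Hf K1 Qmax ltac:(unfold K1; lra) ltac:(unfold Qmax, K0; lra)) as [m [Hm Hfm]].
  set (d := Rmin (Rmin 1 (m / (6 * beta))) (Rmin (e / (4 * (n + 1))) (1 / (n + 1)))).
  assert (Hd : 0 < d).
  { unfold d. repeat apply Rmin_pos; try lra; apply Rdiv_lt_0_compat; lra. }
  assert (Hd1 : d <= 1) by (unfold d; eapply Rle_trans; [apply Rmin_l| apply Rmin_l]).
  assert (Hdm : 6 * beta * d <= m).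
  { assert (d <= m / (6 * beta)) by (unfold d; eapply Rle_trans; [apply Rmin_l| apply Rmin_r]).
    apply Rmult_le_compat_l with (r := 6 * beta) in H; [|lra].
    replace (6 * beta * (m / (6 * beta))) with m in H by (field; lra). lra. }
  assert (Hde : d * (n + 1) <= e / 4).
  { assert (d <= e / (4 * (n + 1))) by (unfold d; eapply Rle_trans; [apply Rmin_r| apply Rmin_l]).
    apply Rmult_le_compat_r with (r := n + 1) in H; [|lra].
    replace (e / (4 * (n + 1)) * (n + 1)) with (e / 4) in H by (field; lra). lra. }
  assert (Hdn : d * (n + 1) <= 1).
  { assert (d <= 1 / (n + 1)) by (unfold d; eapply Rle_trans; [apply Rmin_r| apply Rmin_r]).
    apply Rmult_le_compat_r with (r := n + 1) in H; [|lra].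
    replace (1 / (n + 1) * (n + 1)) with 1 in H by (field; lra). lra. }
  set (RR := Z.max (up (Mx / d)) Nn).
  assert (HR1 : Mx < d * IZR RR).
  { pose proof (archimed (Mx / d)) as [Hu _].
    assert (IZR (up (Mx / d)) <= IZR RR) by (apply IZR_le; unfold RR; lia).
    assert (Mx / d < IZR RR) by lra.
    apply Rmult_lt_compat_l with (r := d) in H0; auto. replace (d * (Mx / d)) with Mx in H0 by (field; lra). lra. }
  assert (HR2 : d * IZR RR <= Mx + 1).
  { unfold RR. destruct (Z.max_spec (up (Mx / d)) Nn) as [[_ Hmx]|[_ Hmx]]; rewrite Hmx.
    - fold n. nra.
    - pose proof (archimed (Mx / d)) as [_ Hu].
      assert (IZR (up (Mx / d)) <= Mx / d + 1) by lra.
      apply Rmult_le_compat_l with (r := d) in H; [|lra].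
      replace (d * (Mx / d + 1)) with (Mx + d) in H by (field; lra). lra. }
  assert (HR0 : (0 <= RR)%Z) by (unfold RR; lia).
  assert (HRN : (Nn <= RR)%Z) by (unfold RR; lia).
  assert (HK01 : K1 < K0).
  { unfold K0. assert (0 < Mx) by (unfold Mx; assert (0 <= alpha * M / beta) by (apply Rdiv_le_0_compat; nra); lra). lra. }
  set (rho := Rmin (alpha * d) (m / 2) / (2 * (K0 - K1))).
  assert (Hrho : 0 < rho).
  { unfold rho. apply Rdiv_lt_0_compat. apply Rmin_pos; nra. lra. }
  assert (Hrho1 : rho * (K0 - K1) <= alpha * d / 2 /\ rho * (K0 - K1) <= m / 4).
  { unfold rho. replace (Rmin (alpha * d) (m / 2) / (2 * (K0 - K1)) * (K0 - K1)) with (Rmin (alpha * d) (m / 2) / 2) by (field; lra).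
    pose proof (Rmin_l (alpha * d) (m / 2)). pose proof (Rmin_r (alpha * d) (m / 2)). lra. }
  set (K := fun t => K1 + (K0 - K1) * exp (- rho * (t - 1))).
  set (l := lpair (- RR) RR (- RR) RR).
  set (z := fun (i : Z * bool) (u : R) => let '(k, b) := i in
     if b then B * (K u + d * Rabs (IZR k) + d) - V k u else K u + d * Rabs (IZR k) - P k u).
  set (dz := fun (i : Z * bool) (u : R) => let '(k, b) := i in
     if b then B * ((K0 - K1) * (- rho * exp (- rho * (u - 1)))) - (- 2 * alpha * V k u + beta * (P k u + P (k + 1)%Z u))
     else (K0 - K1) * (- rho * exp (- rho * (u - 1))) - (f (P k u) + alpha * (V k u + V (k - 1)%Z u) - 2 * beta * P k u)).
  assert (HKb : forall u, 1 <= u -> K1 <= K u <= K0 /\ (K0 - K1) * (- rho * exp (- rho * (u - 1))) >= - rho * (K0 - K1)).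
  { intros u Hu. assert (Hex : exp (- rho * (u - 1)) <= 1).
    { apply Rle_trans with (exp 0); [apply exp_mono; nra | rewrite exp_0; lra]. }
    pose proof (exp_pos (- rho * (u - 1))).
    assert (0 <= (K0 - K1) * exp (- rho * (u - 1))) by (apply Rmult_le_pos; lra).
    assert (0 <= (K0 - K1) * (1 - exp (- rho * (u - 1)))) by (apply Rmult_le_pos; lra).
    assert (0 <= rho * ((K0 - K1) * (1 - exp (- rho * (u - 1))))) by (apply Rmult_le_pos; lra).
    unfold K. split; [split|]; nra. }
  assert (Key : forall i u, In i l -> 1 <= u -> 0 < z i u).
  { apply (first_touch l z dz 1).
    - intros [k b] u _ Hu. simpl. destruct b.
      + apply der_sub. unfold K. auto_derive; auto. unfold Rminus. ring. apply HVd; lra.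
      + apply der_sub. unfold K. auto_derive; auto. unfold Rminus. ring. apply HPd; lra.
    - intros [k b] Hi. simpl.
      assert (HK1 : K 1 = K0) by (unfold K; rewrite Rminus_diag, Rmult_0_r, exp_0; ring).
      rewrite HK1. pose proof (Rabs_pos (IZR k)).
      assert (0 <= d * Rabs (IZR k)) by (apply Rmult_le_pos; lra).
      destruct b.
      + pose proof (bdV k 1 ltac:(lra)).
        assert (B * Mx < B * (K0 + d * Rabs (IZR k) + d)) by (apply Rmult_lt_compat_l; auto; unfold K0, K1; lra). lra.
      + pose proof (bdP k 1 ltac:(lra)). unfold K0, K1 in *. lra.
    - intros [k b] u Hi Hu Hall Hz. simpl in Hz |- *.
      destruct (HKb u (Rlt_le _ _ Hu)) as [[HK1 HK2] HK'].
      set (a := Rabs (IZR k)) in *. pose proof (Rabs_pos (IZR k)) as Ha0. fold a in Ha0.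
      destruct b.
      + apply in_lpair_t in Hi.
        assert (HPk : P k u <= K u + d * a).
        { assert (In (k, false) l) by (apply in_lpair_f; auto). specialize (Hall _ H). simpl in Hall. fold a in Hall. lra. }
        assert (HPk1 : P (k + 1)%Z u <= K u + d * (a + 1)).
        { destruct (Z_le_gt_dec (k + 1) RR).
          - assert (In ((k + 1)%Z, false) l) by (apply in_lpair_f; lia). specialize (Hall _ H). simpl in Hall.
            pose proof (abs_succ k). fold a in H0. nra.
          - assert (k = RR) by lia. rewrite H in *.
            pose proof (bdP (RR + 1) u ltac:(lra)).
            assert (IZR RR <= a) by (unfold a; rewrite H; apply Rle_abs).
            assert (d * IZR RR <= d * a) by (apply Rmult_le_compat_l; lra).
            unfold K1 in HK1. lra. }
        assert (HVk : V k u = B * (K u + d * a + d)) by lra.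
        rewrite HVk.
        assert (E1 : 2 * alpha * (B * (K u + d * a + d)) = 2 * beta * (K u + d * a + d)) by (rewrite <- HaB; ring).
        assert (E2 : B * (- rho * (K0 - K1)) >= - beta * d / 2).
        { assert (B * (rho * (K0 - K1)) <= B * (alpha * d / 2)) by (apply Rmult_le_compat_l; lra).
          replace (B * (alpha * d / 2)) with (beta * d / 2) in H by (rewrite <- HaB; field). lra. }
        assert (E3 : B * ((K0 - K1) * (- rho * exp (- rho * (u - 1)))) >= B * (- rho * (K0 - K1))).
        { apply Rle_ge, Rmult_le_compat_l; lra. }
        assert (beta * (P k u + P (k + 1)%Z u) <= beta * (2 * K u + 2 * d * a + d)) by (apply Rmult_le_compat_l; lra).
        nra.
      + apply in_lpair_f in Hi.
        assert (HVk : V k u <= B * (K u + d * a + d)).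
        { assert (In (k, true) l) by (apply in_lpair_t; auto). specialize (Hall _ H). simpl in Hall. fold a in Hall. lra. }
        assert (HVk1 : V (k - 1)%Z u <= B * (K u + d * (a + 1) + d)).
        { destruct (Z_le_gt_dec (- RR) (k - 1)).
          - assert (In ((k - 1)%Z, true) l) by (apply in_lpair_t; lia). specialize (Hall _ H). simpl in Hall.
            pose proof (abs_pred k). fold a in H0.
            assert (B * (K u + d * Rabs (IZR (k - 1)) + d) <= B * (K u + d * (a + 1) + d)).
            { apply Rmult_le_compat_l. lra. nra. }
            lra.
          - assert (k = (- RR)%Z) by lia. rewrite H in *.
            pose proof (bdV (- RR - 1) u ltac:(lra)).
            assert (IZR RR <= a) by (unfold a; rewrite H, Ropp_Ropp_IZR, Rabs_Ropp; apply Rle_abs).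
            assert (d * IZR RR <= d * a) by (apply Rmult_le_compat_l; lra).
            assert (B * Mx <= B * (K u + d * (a + 1) + d)).
            { apply Rmult_le_compat_l. lra. unfold K1 in HK1. lra. }
            lra. }
        assert (HPk : P k u = K u + d * a) by lra.
        assert (Hfp : f (P k u) <= - m).
        { apply Hfm. rewrite HPk. split. nra.
          assert (a <= IZR RR) by (unfold a; rewrite <- abs_IZR; apply IZR_le; lia).
          unfold Qmax. nra. }
        assert (E1 : alpha * (V k u + V (k - 1)%Z u) <= beta * (2 * K u + 2 * d * a + 3 * d)).
        { assert (alpha * (V k u + V (k - 1)%Z u) <= alpha * (B * (K u + d * a + d) + B * (K u + d * (a + 1) + d))).
          { apply Rmult_le_compat_l; lra. }
          replace (alpha * (B * (K u + d * a + d) + B * (K u + d * (a + 1) + d))) with (beta * (2 * K u + 2 * d * a + 3 * d)) in H by (rewrite <- HaB; ring).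
          lra. }
        rewrite HPk in *. lra. }
  assert (Hsm : 0 < e / (4 * (K0 - K1))) by (apply Rdiv_lt_0_compat; lra).
  exists (1 + Rabs (ln (e / (4 * (K0 - K1)))) / rho).
  intros t Ht j Hj.
  assert (Ht1 : 1 <= t).
  { assert (0 <= Rabs (ln (e / (4 * (K0 - K1)))) / rho) by (apply Rdiv_le_0_compat; [apply Rabs_pos|lra]). lra. }
  pose proof (exp_small rho _ Hrho Hsm t Ht) as Hex.
  assert (HKt : K t <= K1 + e / 4).
  { unfold K. assert ((K0 - K1) * exp (- rho * (t - 1)) <= (K0 - K1) * (e / (4 * (K0 - K1)))) by (apply Rmult_le_compat_l; lra).
    replace ((K0 - K1) * (e / (4 * (K0 - K1)))) with (e / 4) in H by (field; lra). lra. }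
  assert (Hja : Rabs (IZR j) <= n).
  { rewrite <- abs_IZR. apply IZR_le. unfold Nn. lia. }
  assert (HjR : (- RR <= j <= RR)%Z) by lia.
  assert (Hda : d * Rabs (IZR j) <= d * n) by (apply Rmult_le_compat_l; lra).
  split.
  - assert (In (j, true) l) by (apply in_lpair_t; auto).
    specialize (Key _ t H Ht1). simpl in Key.
    assert (B * (K t + d * Rabs (IZR j) + d) <= B * (1 + 3 * e / 4)).
    { apply Rmult_le_compat_l. lra. unfold K1 in HKt. nra. }
    unfold B in *. nra.
  - assert (In (j, false) l) by (apply in_lpair_f; auto).
    specialize (Key _ t H Ht1). simpl in Key. unfold K1 in HKt. nra.
Qed.

Lemma lower : forall N eps, 0 < eps -> exists T, forall t, T <= t -> forall j, (Z.abs j <= N)%Z ->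
  beta / alpha - eps < V j t /\ 1 - eps < P j t.
Proof.
  intros N eps Heps.
  set (Nn := Z.max N 0). set (n := IZR Nn).
  assert (Hn : 0 <= n) by (unfold n; apply IZR_le; lia).
  set (B := beta / alpha).
  assert (HB : 0 < B) by (unfold B; apply Rdiv_lt_0_compat; lra).
  assert (HaB : alpha * B = beta) by (unfold B; field; lra).
  set (e := eps * alpha / (alpha + beta)).
  assert (He : 0 < e) by (unfold e; apply Rdiv_lt_0_compat; nra).
  assert (HeB : B * e < eps).
  { unfold B, e. replace (beta / alpha * (eps * alpha / (alpha + beta))) with (eps * (beta / (alpha + beta))) by (field; lra).
    assert (beta / (alpha + beta) < 1). { apply Rmult_lt_reg_r with (alpha + beta). lra. field_simplify; lra. }
    nra. }
  assert (Hee : e < eps).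
  { unfold e. replace (eps * alpha / (alpha + beta)) with (eps * (alpha / (alpha + beta))) by (field; lra).
    assert (alpha / (alpha + beta) < 1). { apply Rmult_lt_reg_r with (alpha + beta). lra. field_simplify; lra. }
    nra. }
  set (eta := Rmin (e / 8) (1 / 2)).
  assert (Heta : 0 < eta) by (unfold eta; apply Rmin_pos; lra).
  assert (Heta1 : eta <= e / 8) by apply Rmin_l.
  assert (Heta2 : eta <= 1 / 2) by apply Rmin_r.
  set (ths := 1 - eta / 2).
  destruct (f_kpp f Hf ths ltac:(unfold ths; lra)) as [c [Hc Hfc]].
  set (eta1 := Rmin eta (c / (8 * beta))).
  assert (Heta1p : 0 < eta1) by (unfold eta1; apply Rmin_pos; [lra| apply Rdiv_lt_0_compat; lra]).
  assert (He1a : eta1 <= eta) by apply Rmin_l.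
  assert (He1b : 8 * beta * eta1 <= c).
  { assert (eta1 <= c / (8 * beta)) by apply Rmin_r.
    apply Rmult_le_compat_l with (r := 8 * beta) in H; [|lra].
    replace (8 * beta * (c / (8 * beta))) with c in H by (field; lra). lra. }
  destruct (cont_eps cos 0 (continuity_cos 0) eta1 Heta1p) as [dc [Hdc Hcos]].
  rewrite cos_0 in Hcos.
  set (L := Z.max Nn (up (PI * (n + 1) / dc))).
  assert (HL0 : (0 <= L)%Z) by (unfold L; lia).
  assert (HLN : (Nn <= L)%Z) by (unfold L; lia).
  set (Lr := IZR L).
  assert (HLr : 0 <= Lr) by (unfold Lr; apply IZR_le; lia).
  set (k := PI / (2 * (Lr + 1))).
  pose proof PI_RGT_0 as HPI.
  assert (Hk : 0 < k) by (unfold k; apply Rdiv_lt_0_compat; lra).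
  assert (HkL : k * (Lr + 1) = PI / 2) by (unfold k; field; lra).
  assert (Hkn : k * (n + 1) < dc).
  { assert (HLb : PI * (n + 1) / dc < Lr + 1).
    { pose proof (archimed (PI * (n + 1) / dc)) as [Hu _].
      assert (IZR (up (PI * (n + 1) / dc)) <= Lr) by (unfold Lr; apply IZR_le; unfold L; lia). lra. }
    unfold k. apply Rmult_lt_reg_r with (2 * (Lr + 1) / PI).
    apply Rdiv_lt_0_compat; lra.
    replace (PI / (2 * (Lr + 1)) * (n + 1) * (2 * (Lr + 1) / PI)) with (n + 1) by (field; lra).
    apply Rmult_lt_compat_r with (r := dc) in HLb; auto.
    replace (PI * (n + 1) / dc * dc) with (PI * (n + 1)) in HLb by (field; lra).
    assert ((Lr + 1) * dc <= dc * (2 * (Lr + 1))) by nra.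
    apply Rmult_lt_reg_l with PI. lra.
    replace (PI * (dc * (2 * (Lr + 1) / PI))) with (dc * (2 * (Lr + 1))) by (field; lra). lra. }
  assert (Hcosb : forall x, Rabs x <= k * (n + 1) -> 1 - eta1 <= cos x).
  { intros x Hx. assert (Rabs (x - 0) < dc) by (rewrite Rminus_0_r; lra).
    specialize (Hcos x H). apply Rabs_def2 in Hcos. lra. }
  set (gam := cos (k / 2)).
  assert (Hgam : 1 - eta1 <= gam).
  { apply Hcosb. rewrite Rabs_pos_eq by lra. nra. }
  assert (Hgam1 : gam <= 1) by apply COS_bound.
  set (lam := Rmin (c * alpha / (4 * (alpha + 2 * beta))) (alpha * eta1)).
  assert (Hlam : 0 < lam).
  { unfold lam. apply Rmin_pos. apply Rdiv_lt_0_compat; nra. nra. }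
  assert (Hlam1 : lam * (alpha + 2 * beta) <= c * alpha / 4).
  { assert (lam <= c * alpha / (4 * (alpha + 2 * beta))) by apply Rmin_l.
    apply Rmult_le_compat_r with (r := alpha + 2 * beta) in H; [|lra].
    replace (c * alpha / (4 * (alpha + 2 * beta)) * (alpha + 2 * beta)) with (c * alpha / 4) in H by (field; lra). lra. }
  assert (Hlam2 : lam <= alpha * eta1) by apply Rmin_r.
  set (A := beta * gam / (alpha + lam)).
  assert (HA : 0 < A) by (unfold A; apply Rdiv_lt_0_compat; nra).
  assert (SubV : 0 < 2 * beta * gam - A * (2 * alpha + lam)).
  { unfold A. apply Rmult_lt_reg_r with (alpha + lam). lra. rewrite Rmult_0_l.
    replace ((2 * beta * gam - beta * gam / (alpha + lam) * (2 * alpha + lam)) * (alpha + lam))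
      with (beta * gam * lam) by (field; lra). apply Rmult_lt_0_compat; [apply Rmult_lt_0_compat|]; lra. }
  assert (SubP : 0 < c + 2 * alpha * A * gam - 2 * beta - lam).
  { unfold A. apply Rmult_lt_reg_r with (alpha + lam). lra. rewrite Rmult_0_l.
    replace ((c + 2 * alpha * (beta * gam / (alpha + lam)) * gam - 2 * beta - lam) * (alpha + lam))
      with ((c - 2 * beta - lam) * (alpha + lam) + 2 * alpha * beta * (gam * gam)) by (field; lra).
    assert (gam * gam >= 1 - 2 * eta1) by nra.
    assert (2 * alpha * beta * (gam * gam) >= 2 * alpha * beta * (1 - 2 * eta1)).
    { apply Rle_ge, Rmult_le_compat_l. nra. lra. }
    assert (lam <= c / 4).
    { assert (lam * alpha <= c * alpha / 4) by nra. nra. }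
    assert (lam * lam <= lam * (c / 4)) by (apply Rmult_le_compat_l; lra).
    assert (4 * alpha * beta * eta1 <= alpha * c / 2) by nra.
    nra. }
  destruct all_pos as [a [Ha0 Hpos]].
  set (t0 := a + 1).
  set (l := lpair (- L - 1) L (- L) L).
  destruct (list_min_pos l (fun i => let '(j, b) := i in if b then V j t0 else P j t0)) as [m0 [Hm0 Hm0l]].
  { intros [j b] _. destruct (Hpos j t0 ltac:(unfold t0; lra)). destruct b; auto. }
  set (del := Rmin (ths / 2) (m0 / (A + 2))).
  assert (Hdel : 0 < del) by (unfold del; apply Rmin_pos; [unfold ths; lra| apply Rdiv_lt_0_compat; lra]).
  assert (Hdel1 : del <= ths / 2) by apply Rmin_l.
  assert (Hdel2 : del * (A + 2) <= m0).
  { assert (del <= m0 / (A + 2)) by apply Rmin_r.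
    apply Rmult_le_compat_r with (r := A + 2) in H; [|lra].
    replace (m0 / (A + 2) * (A + 2)) with m0 in H by (field; lra). lra. }
  set (mu := lam * del / ths).
  assert (Hmu : 0 < mu) by (unfold mu, ths; apply Rdiv_lt_0_compat; nra).
  set (th := fun u => ths - (ths - del) * exp (- mu * (u - t0))).
  set (dth := fun u => (ths - del) * (mu * exp (- mu * (u - t0)))).
  assert (Hth : forall u, t0 <= u -> del <= th u <= ths /\ 0 <= dth u <= lam * th u).
  { intros u Hu. assert (Hex : exp (- mu * (u - t0)) <= 1).
    { apply Rle_trans with (exp 0); [apply exp_mono; nra | rewrite exp_0; lra]. }
    pose proof (exp_pos (- mu * (u - t0))).
    assert (0 <= (ths - del) * exp (- mu * (u - t0))) by (apply Rmult_le_pos; unfold ths in *; lra).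
    assert ((ths - del) * exp (- mu * (u - t0)) <= ths - del).
    { rewrite <- (Rmult_1_r (ths - del)) at 2. apply Rmult_le_compat_l; unfold ths in *; lra. }
    unfold th, dth. split. lra. split. apply Rmult_le_pos. unfold ths in *; lra. nra.
    assert (mu * ths = lam * del) by (unfold mu, ths; field; lra).
    assert (mu * ((ths - del) * exp (- mu * (u - t0))) <= mu * ths).
    { apply Rmult_le_compat_l; lra. }
    assert (lam * del <= lam * (ths - (ths - del) * exp (- mu * (u - t0)))).
    { apply Rmult_le_compat_l; lra. }
    nra. }
  assert (CV : forall j, (- L - 1 <= j <= L)%Z -> 0 < cos (k * (IZR j + 1 / 2))).
  { intros j Hj. apply cos_gt_0.
    - assert (IZR (- L - 1) <= IZR j) by (apply IZR_le; lia).
      rewrite minus_IZR, opp_IZR in H. fold Lr in H. nra.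
    - assert (IZR j <= Lr) by (apply IZR_le; lia). nra. }
  assert (CP : forall j, (- L <= j <= L)%Z -> 0 < cos (k * IZR j)).
  { intros j Hj. apply cos_gt_0.
    - assert (IZR (- L) <= IZR j) by (apply IZR_le; lia).
      rewrite opp_IZR in H. fold Lr in H. nra.
    - assert (IZR j <= Lr) by (apply IZR_le; lia). nra. }
  assert (CPb1 : cos (k * IZR (L + 1)) = 0).
  { rewrite plus_IZR. fold Lr. rewrite HkL. apply cos_PI2. }
  assert (CPb2 : cos (k * IZR (- L - 1)) = 0).
  { rewrite minus_IZR, opp_IZR. fold Lr. replace (k * (- Lr - 1)) with (- (k * (Lr + 1))) by ring.
    rewrite cos_neg, HkL. apply cos_PI2. }
  set (z := fun (i : Z * bool) (u : R) => let '(j, b) := i in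
     if b then V j u - th u * A * cos (k * (IZR j + 1 / 2)) else P j u - th u * cos (k * IZR j)).
  set (dz := fun (i : Z * bool) (u : R) => let '(j, b) := i in
     if b then (- 2 * alpha * V j u + beta * (P j u + P (j + 1)%Z u)) - dth u * A * cos (k * (IZR j + 1 / 2))
     else (f (P j u) + alpha * (V j u + V (j - 1)%Z u) - 2 * beta * P j u) - dth u * cos (k * IZR j)).
  assert (Key : forall i u, In i l -> t0 <= u -> 0 < z i u).
  { apply (first_touch l z dz t0).
    - intros [j b] u _ Hu. simpl. destruct b.
      + apply der_sub. apply HVd; unfold t0 in Hu; lra. unfold th, dth. auto_derive; auto. unfold Rminus. ring.
      + apply der_sub. apply HPd; unfold t0 in Hu; lra. unfold th, dth. auto_derive; auto. unfold Rminus. ring.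
    - intros [j b] Hi. simpl.
      assert (Ht0 : th t0 = del) by (unfold th; rewrite Rminus_diag, Rmult_0_r, exp_0; ring).
      rewrite Ht0. specialize (Hm0l _ Hi). simpl in Hm0l. destruct b.
      + apply in_lpair_t in Hi. pose proof (CV j Hi). pose proof (COS_bound (k * (IZR j + 1 / 2))).
        assert (del * A * cos (k * (IZR j + 1 / 2)) <= del * A) by (rewrite <- (Rmult_1_r (del * A)) at 2; apply Rmult_le_compat_l; nra).
        nra.
      + pose proof (COS_bound (k * IZR j)).
        assert (del * cos (k * IZR j) <= del) by nra. nra.
    - intros [j b] u Hi Hu Hall Hz. simpl in Hz |- *.
      destruct (Hth u (Rlt_le _ _ Hu)) as [[Hth1 Hth2] [Hd1 Hd2]].
      assert (Hu0 : 0 < u) by (unfold t0 in Hu; lra).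
      destruct b.
      + apply in_lpair_t in Hi. set (cv := cos (k * (IZR j + 1 / 2))) in *.
        assert (Hcv : 0 < cv) by (apply CV; auto).
        assert (HPj : P j u >= th u * cos (k * IZR j)).
        { destruct (Z_le_gt_dec (- L) j).
          - assert (In (j, false) l) by (apply in_lpair_f; lia). specialize (Hall _ H). simpl in Hall. lra.
          - assert (j = (- L - 1)%Z) by lia. rewrite H, CPb2. pose proof (nonneg (- L - 1)%Z u Hu0). lra. }
        assert (HPj1 : P (j + 1)%Z u >= th u * cos (k * (IZR j + 1))).
        { rewrite <- plus_IZR. destruct (Z_le_gt_dec (j + 1) L).
          - assert (In ((j + 1)%Z, false) l) by (apply in_lpair_f; lia). specialize (Hall _ H). simpl in Hall. lra.
          - assert (j = L) by lia. rewrite H, CPb1. pose proof (nonneg (L + 1)%Z u Hu0). lra. }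
        assert (Hsum : th u * cos (k * IZR j) + th u * cos (k * (IZR j + 1)) = th u * (2 * gam * cv)).
        { rewrite <- Rmult_plus_distr_l, cos_sum1. reflexivity. }
        assert (HVj : V j u = th u * A * cv) by lra.
        rewrite HVj.
        assert (beta * (P j u + P (j + 1)%Z u) >= beta * (th u * (2 * gam * cv))).
        { apply Rle_ge, Rmult_le_compat_l; lra. }
        assert (dth u * A * cv <= lam * th u * A * cv).
        { apply Rmult_le_compat_r. lra. apply Rmult_le_compat_r; lra. }
        assert (0 < th u * cv * (2 * beta * gam - A * (2 * alpha + lam))).
        { apply Rmult_lt_0_compat. apply Rmult_lt_0_compat; lra. auto. }
        nra.
      + apply in_lpair_f in Hi. set (cp := cos (k * IZR j)) in *.
        assert (Hcp : 0 < cp) by (apply CP; auto).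
        assert (Hcp1 : cp <= 1) by apply COS_bound.
        assert (HVj : V j u >= th u * A * cos (k * (IZR j + 1 / 2))).
        { assert (In (j, true) l) by (apply in_lpair_t; lia). specialize (Hall _ H). simpl in Hall. lra. }
        assert (HVj1 : V (j - 1)%Z u >= th u * A * cos (k * (IZR j - 1 + 1 / 2))).
        { rewrite <- minus_IZR. assert (In ((j - 1)%Z, true) l) by (apply in_lpair_t; lia). specialize (Hall _ H). simpl in Hall. lra. }
        assert (Hsum : th u * A * cos (k * (IZR j + 1 / 2)) + th u * A * cos (k * (IZR j - 1 + 1 / 2)) = th u * A * (2 * gam * cp)).
        { rewrite <- Rmult_plus_distr_l, cos_sum2. reflexivity. }
        assert (HPj : P j u = th u * cp) by lra.
        assert (Hf1 : f (P j u) >= c * (th u * cp)).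
        { rewrite HPj. apply Hfc. split. apply Rmult_le_pos; lra.
          assert (th u * cp <= th u * 1) by (apply Rmult_le_compat_l; lra). lra. }
        rewrite HPj in *.
        assert (alpha * (V j u + V (j - 1)%Z u) >= alpha * (th u * A * (2 * gam * cp))).
        { apply Rle_ge, Rmult_le_compat_l; lra. }
        assert (dth u * cp <= lam * th u * cp) by (apply Rmult_le_compat_r; lra).
        assert (0 < th u * cp * (c + 2 * alpha * A * gam - 2 * beta - lam)).
        { apply Rmult_lt_0_compat. apply Rmult_lt_0_compat; lra. auto. }
        nra. }
  assert (Hsm : 0 < eta / 2) by lra.
  exists (t0 + Rabs (ln (eta / 2)) / mu).
  intros t Ht j Hj.
  assert (Ht1 : t0 <= t).
  { assert (0 <= Rabs (ln (eta / 2)) / mu) by (apply Rdiv_le_0_compat; [apply Rabs_pos|lra]). lra. }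
  pose proof (exp_small2 mu _ t0 Hmu Hsm t Ht) as Hex.
  destruct (Hth t Ht1) as [[Hth1 Hth2] _].
  assert (Htht : 1 - eta <= th t).
  { unfold th. assert ((ths - del) * exp (- mu * (t - t0)) <= 1 * (eta / 2)).
    { apply Rmult_le_compat. unfold ths in *; lra. left; apply exp_pos. unfold ths; lra. auto. }
    unfold ths in *. lra. }
  assert (Hja : Rabs (IZR j) <= n).
  { rewrite <- abs_IZR. apply IZR_le. unfold Nn. lia. }
  assert (HjL : (- L <= j <= L)%Z) by lia.
  assert (Hcp : 1 - eta <= cos (k * IZR j)).
  { assert (1 - eta1 <= cos (k * IZR j)). apply Hcosb. rewrite Rabs_mult, (Rabs_pos_eq k) by lra. nra. lra. }
  assert (Hcv : 1 - eta <= cos (k * (IZR j + 1 / 2))).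
  { assert (1 - eta1 <= cos (k * (IZR j + 1 / 2))). apply Hcosb. rewrite Rabs_mult, (Rabs_pos_eq k) by lra.
    pose proof (Rabs_triang (IZR j) (1/2)). rewrite (Rabs_pos_eq (1/2)) in H by lra. nra. lra. }
  assert (HAl : B * ((1 - eta) * (1 - eta)) <= A).
  { unfold A, B. 
    assert (alpha * (1 - eta) <= alpha * alpha / (alpha + lam)).
    { apply Rmult_le_reg_r with (alpha + lam). lra. 
      replace (alpha * alpha / (alpha + lam) * (alpha + lam)) with (alpha * alpha) by (field; lra).
      assert (lam <= alpha * eta) by nra. nra. }
    replace (beta * gam / (alpha + lam)) with (beta / alpha * gam * (alpha * alpha / (alpha + lam)) / alpha) by (field; lra).
    assert (beta / alpha * (1 - eta) * (alpha * (1 - eta)) <= beta / alpha * gam * (alpha * alpha / (alpha + lam))).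
    { apply Rmult_le_compat. fold B; nra. nra. fold B. apply Rmult_le_compat_l; lra. auto. }
    apply Rmult_le_reg_r with alpha. lra.
    replace (beta / alpha * gam * (alpha * alpha / (alpha + lam)) / alpha * alpha) with (beta / alpha * gam * (alpha * alpha / (alpha + lam))) by (field; lra).
    lra. }
  assert (Hx2 : 1 - 2 * eta <= (1 - eta) * (1 - eta)) by nra.
  assert (Hx4 : 1 - 4 * eta <= (1 - eta) * (1 - eta) * ((1 - eta) * (1 - eta))) by nra.
  split.
  - assert (In (j, true) l) by (apply in_lpair_t; lia).
    specialize (Key _ t H Ht1). simpl in Key.
    assert (th t * A * cos (k * (IZR j + 1 / 2)) >= (1 - eta) * (B * ((1 - eta) * (1 - eta))) * (1 - eta)).
    { apply Rle_ge. apply Rmult_le_compat. apply Rmult_le_pos; nra. lra.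
      apply Rmult_le_compat; nra. lra. }
    assert ((1 - eta) * (B * ((1 - eta) * (1 - eta))) * (1 - eta) = B * ((1 - eta) * (1 - eta) * ((1 - eta) * (1 - eta)))) by ring.
    assert (B * (1 - 4 * eta) <= B * ((1 - eta) * (1 - eta) * ((1 - eta) * (1 - eta)))) by (apply Rmult_le_compat_l; lra).
    fold B. nra.
  - assert (In (j, false) l) by (apply in_lpair_f; lia).
    specialize (Key _ t H Ht1). simpl in Key.
    assert (th t * cos (k * IZR j) >= (1 - eta) * (1 - eta)).
    { apply Rle_ge, Rmult_le_compat; lra. }
    lra.
Qed.

End Sol.

Theorem proposition6p3
  (alpha beta : R) (f : R -> R) (V0 P0 : Z -> R) (V P : Z -> R -> R) :
  0 < alpha -> 0 < beta ->
  admissible_f f ->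
  bounded_seq V0 -> bounded_seq P0 ->
  (forall j, 0 <= V0 j /\ 0 <= P0 j) ->
  (exists j, V0 j <> 0 \/ P0 j <> 0) ->
  (* (V,P) is a bounded global classical solution *)
  (forall j, exists dV dP, C1_on_with (V j) nonneg_half_line dV
                         /\ C1_on_with (P j) nonneg_half_line dP) ->
  (exists M, forall j t, 0 <= t -> Rabs (V j t) <= M /\ Rabs (P j t) <= M) ->
  (forall j t, 0 < t ->
     is_derive (V j) t (- 2 * alpha * V j t + beta * (P j t + P (j + 1)%Z t))) ->
  (forall j t, 0 < t ->
     is_derive (P j) t (f (P j t) + alpha * (V j t + V (j - 1)%Z t) - 2 * beta * P j t)) ->
  (forall j, V j 0 = V0 j /\ P j 0 = P0 j) ->
  (* locally uniform convergence in j to (beta/alpha, 1) *)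
  forall (N : Z) (eps : R), 0 < eps ->
    exists T, forall t, T <= t -> forall j, (Z.abs j <= N)%Z ->
      Rabs (V j t - beta / alpha) < eps /\ Rabs (P j t - 1) < eps.
Proof.
  intros Ha Hb Hf _ _ Hnn Hnz HC [Mb HMb] HVd HPd Hinit N eps Heps.
  set (M := Rmax Mb 1).
  assert (HM : 0 < M) by (unfold M; pose proof (Rmax_r Mb 1); lra).
  assert (Hbd : forall j t, 0 <= t -> Rabs (V j t) <= M /\ Rabs (P j t) <= M).
  { intros j t Ht. destruct (HMb j t Ht). pose proof (Rmax_l Mb 1). fold M in H1. split; lra. }
  assert (Hrc : forall j e, 0 < e -> exists d, 0 < d /\ forall h, 0 < h < d ->
     Rabs (V j h - V j 0) < e /\ Rabs (P j h - P j 0) < e).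
  { intros j e He. destruct (HC j) as [dV [dP [[HdV _] [HdP _]]]].
    assert (H0 : nonneg_half_line 0) by (unfold nonneg_half_line; lra).
    destruct (right_cont0 _ _ (HdV 0 H0) e He) as [d1 [Hd1 H1]].
    destruct (right_cont0 _ _ (HdP 0 H0) e He) as [d2 [Hd2 H2]].
    exists (Rmin d1 d2). split. apply Rmin_pos; auto.
    intros h Hh. pose proof (Rmin_l d1 d2). pose proof (Rmin_r d1 d2).
    split; [apply H1 | apply H2]; lra. }
  assert (Hnn0 : forall j, 0 <= V j 0 /\ 0 <= P j 0).
  { intros j. destruct (Hinit j) as [-> ->]. apply Hnn. }
  assert (Hnz0 : exists j, V j 0 <> 0 \/ P j 0 <> 0).
  { destruct Hnz as [j Hj]. exists j. destruct (Hinit j) as [-> ->]. auto. }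
  destruct (upper alpha beta M f V P Ha Hb Hf HM Hbd HVd HPd N eps Heps) as [T1 HT1].
  destruct (lower alpha beta M f V P Ha Hb Hf HM Hbd HVd HPd Hrc Hnn0 Hnz0 N eps Heps) as [T2 HT2].
  exists (Rmax T1 T2). intros t Ht j Hj.
  pose proof (Rmax_l T1 T2). pose proof (Rmax_r T1 T2).
  destruct (HT1 t ltac:(lra) j Hj). destruct (HT2 t ltac:(lra) j Hj).
  split; apply Rabs_def1; lra.
Qed.
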